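(* Let $m\ge 1$, $p\ge 2m+3$, and let $\Sigma=(\sigma_{ij})\in\mathbb{R}^{p\times p}$ be positive definite such that every $(p-1)\times(p-1)$ principal submatrix of $\Sigma$ lies in $F_{p-1,m}$. Write $\Sigma_{\setminus p,\setminus p}=\Delta+\Gamma\Gamma^t$ and $\Sigma_{\setminus 1,\setminus 1}=D+GG^t$ with $\Delta, D$ positive definite diagonal $(p-1)\times(p-1)$ matrices and $\Gamma,G\in\mathbb{R}^{(p-1)\times m}$, where the rows of $\Delta,\Gamma$ are indexed by $1,\dots,p-1$ and the rows of $D,G$ are indexed by $2,\dots,p$ (matching the rows of $\Sigma$). Suppose: (i) $\Gamma_{\setminus 1}=G_{\setminus p}$, i.e. the rows of $\Gamma$ and $G$ indexed by $2,\dots,p-1$ coincide; and (ii) there are disjoint subsets $B,C\subseteq\{2,\dots,p-1\}$ with $|B|=|C|=m$ such that $\det(\Sigma_{B,C})\neq 0$. Then $\Sigma\in F_{p,m}$.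
   Context: For integers $p\ge 1$, $m\ge 1$, $F_{p,m}=\{\Delta+\Gamma\Gamma^t : \Delta \text{ a positive definite diagonal } p\times p \text{ matrix},\ \Gamma\in\mathbb{R}^{p\times m}\}$. For a matrix $\Lambda$ with row index set $I$ and column index set $J$ and $A\subseteq I$, $B\subseteq J$: $\Lambda_{A,B}$ is the submatrix with rows in $A$ and columns in $B$; $\Lambda_A=\Lambda_{A,J}$; $\Lambda_{\setminus A,\setminus B}=\Lambda_{I\setminus A,J\setminus B}$; $\setminus i$ means $\setminus\{i\}$, so $\Lambda_{\setminus i}$ is $\Lambda$ with row $i$ removed and $\Sigma_{\setminus i,\setminus i}$ is $\Sigma$ with row and column $i$ removed. *)

(* Defs.v *)
(* Real numbers are modelled by an arbitrary real closed field. *)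
From HB Require Import structures.
From mathcomp Require Export all_boot all_order all_algebra.
Set Implicit Arguments. Unset Strict Implicit. Unset Printing Implicit Defensive.
Import Order.TTheory GRing.Theory Num.Theory.
Local Open Scope ring_scope.

Definition posdef (R : realFieldType) (n : nat) (S : 'M[R]_n) : Prop :=
  S^T = S /\ forall x : 'cV[R]_n, x != 0 -> 0 < (x^T *m S *m x) 0 0.

Definition inF (R : realFieldType) (n m : nat) (S : 'M[R]_n) : Prop :=
  exists (d : 'rV[R]_n) (G : 'M[R]_(n, m)),
    (forall i, 0 < d 0 i) /\ S = diag_mx d + G *m G^T.

(* Sigma_{B,C} as an m x m matrix, rows/columns in increasing index order
   (meaningful when #|B| = #|C| = m). *)
Definition subsq (R : ringType) (n m : nat) (A : 'M[R]_n.+1)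
  (B C : {set 'I_n.+1}) : 'M[R]_m :=
  \matrix_(i < m, j < m) A (nth ord0 (enum B) i) (nth ord0 (enum C) j).

(* Main.v *)
Require Import Defs.
From HB Require Import structures.
From mathcomp Require Import all_boot all_order all_algebra.
Import Order.TTheory GRing.Theory Num.Theory.
Local Open Scope ring_scope.

Lemma key_mx (R : fieldType) (m : nat) (X Y : 'M[R]_m) (x y : 'rV[R]_m) :
  (X *m Y^T) \in unitmx ->
  (x *m Y^T) *m invmx (X *m Y^T) *m (X *m y^T) = x *m y^T.
Proof.
move=> uM.
have uX : X \in unitmx by move: uM; rewrite unitmx_mul => /andP[].
have -> : x *m Y^T = (x *m invmx X) *m (X *m Y^T).
  by rewrite mulmxA mulmxKV.
rewrite mulmxK // mulmxA mulmxKV //.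
Qed.

Lemma dot_sym (R : comRingType) (m : nat) (u v : 'rV[R]_m) :
  (u *m v^T) 0 0 = (v *m u^T) 0 0.
Proof. by rewrite !mxE; apply: eq_bigr => k _; rewrite !mxE mulrC. Qed.

Lemma ident (R : fieldType) (p m : nat) (S : 'M[R]_p) (f1 f2 : 'I_p -> 'rV[R]_m)
  (b c : 'I_m -> 'I_p) (u v : 'I_p) :
  (forall i k, S (b i) (c k) = (f1 (b i) *m (f1 (c k))^T) 0 0) ->
  (forall i k, S (b i) (c k) = (f2 (b i) *m (f2 (c k))^T) 0 0) ->
  (forall k, S u (c k) = (f1 u *m (f1 (c k))^T) 0 0) ->
  (forall k, S u (c k) = (f2 u *m (f2 (c k))^T) 0 0) ->
  (forall i, S (b i) v = (f1 (b i) *m (f1 v)^T) 0 0) ->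
  (forall i, S (b i) v = (f2 (b i) *m (f2 v)^T) 0 0) ->
  S u v = (f2 u *m (f2 v)^T) 0 0 ->
  (\matrix_(i, k) S (b i) (c k)) \in unitmx ->
  S u v = (f1 u *m (f1 v)^T) 0 0.
Proof.
move=> h1 h2 h3 h4 h5 h6 h7 hu.
pose X (f : 'I_p -> 'rV[R]_m) := \matrix_(i, l) f (b i) 0 l.
pose Y (f : 'I_p -> 'rV[R]_m) := \matrix_(i, l) f (c i) 0 l.
pose r := \row_k S u (c k).
pose s := \col_i S (b i) v.
have eM : forall f, (forall i k, S (b i) (c k) = (f (b i) *m (f (c k))^T) 0 0) ->
    \matrix_(i, k) S (b i) (c k) = X f *m (Y f)^T.
  move=> f hf; apply/matrixP => i k; rewrite !mxE hf !mxE.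
  by apply: eq_bigr => l _; rewrite !mxE.
have er : forall f, (forall k, S u (c k) = (f u *m (f (c k))^T) 0 0) ->
    r = f u *m (Y f)^T.
  move=> f hf; apply/matrixP => i k; rewrite !mxE hf !mxE ord1.
  by apply: eq_bigr => l _; rewrite !mxE.
have es : forall f, (forall i, S (b i) v = (f (b i) *m (f v)^T) 0 0) ->
    s = X f *m (f v)^T.
  move=> f hf; apply/matrixP => i k; rewrite !mxE hf !mxE ord1.
  by apply: eq_bigr => l _; rewrite !mxE.
have E1 : r *m invmx (\matrix_(i, k) S (b i) (c k)) *m s = f1 u *m (f1 v)^T.
  rewrite (er f1 h3) (es f1 h5) (eM f1 h1) key_mx // -(eM f1 h1) //.
have E2 : r *m invmx (\matrix_(i, k) S (b i) (c k)) *m s = f2 u *m (f2 v)^T.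
  rewrite (er f2 h4) (es f2 h6) (eM f2 h2) key_mx // -(eM f2 h2) //.
by rewrite h7 -E2 E1.
Qed.

Lemma lift_max_inord n (x : 'I_n.+2) : (x < n.+1)%N -> lift ord_max (inord x : 'I_n.+1) = x.
Proof. by move=> h; apply: val_inj; rewrite /= /bump inordK // leqNgt h. Qed.

Lemma lift0_inord n (x : 'I_n.+2) : (0 < x)%N -> lift ord0 (inord x.-1 : 'I_n.+1) = x.
Proof.
move=> h; have h1 : (x.-1 < n.+1)%N by rewrite -ltnS prednK // ltn_ord.
by apply: val_inj; rewrite /= /bump inordK // add1n prednK.
Qed.

Theorem lemma2 (R : rcfType) (m n : nat) (Sigma : 'M[R]_n.+1)
  (Delta : 'rV[R]_n) (Gamma : 'M[R]_(n, m)) (D : 'rV[R]_n) (G : 'M[R]_(n, m))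
  (B C : {set 'I_n.+1}) :
  (1 <= m)%N -> (2 * m + 3 <= n.+1)%N ->
  posdef Sigma ->
  (forall i : 'I_n.+1, inF m (row' i (col' i Sigma))) ->
  (forall i, 0 < Delta 0 i) ->
  row' ord_max (col' ord_max Sigma) = diag_mx Delta + Gamma *m Gamma^T ->
  (forall i, 0 < D 0 i) ->
  row' ord0 (col' ord0 Sigma) = diag_mx D + G *m G^T ->
  (forall i k : 'I_n, nat_of_ord i = k.+1 -> row i Gamma = row k G) ->
  [disjoint B & C] ->
  (forall b, b \in B -> (0 < b < n)%N) ->
  (forall c, c \in C -> (0 < c < n)%N) ->
  #|B| = m -> #|C| = m ->
  \det (subsq m Sigma B C) != 0 ->
  inF m Sigma.
Proof.
case: n Sigma Delta Gamma D G B C => [|n] Sigma Delta Gamma D G B C.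
  by rewrite addn3.
move=> m1 hp [symS _] hF hDp HD hDp2 HG hGG dBC hB hC cB cC hdet.
pose L : 'M[R]_(n.+2, m) := \matrix_(x, k)
  if (x < n.+1)%N then Gamma (inord x) k else G (inord x.-1) k.
pose d : 'rV[R]_n.+2 := \row_x
  if (x < n.+1)%N then Delta 0 (inord x) else D 0 (inord x.-1).
have LG : forall x : 'I_n.+2, (0 < x)%N -> forall k, L x k = G (inord x.-1) k.
  move=> x x0 k; rewrite mxE; case: ifP => // hx.
  have hx1 : (x.-1 < n.+1)%N by rewrite -ltnS prednK // ltn_ord.
  have := hGG (inord x) (inord x.-1).
  rewrite (inordK hx) (inordK hx1) prednK // => /(_ erefl).
  by move/(congr1 (fun r : 'rV[R]_m => r 0 k)); rewrite !mxE.
have dotL : forall x y, (row x L *m (row y L)^T) 0 0 = \sum_k L x k * L y k.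
  by move=> x y; rewrite mxE; apply: eq_bigr => k _; rewrite !mxE.
have OA : forall x y : 'I_n.+2, (x < n.+1)%N -> (y < n.+1)%N ->
    Sigma x y = Delta 0 (inord x) *+ (x == y) + \sum_k L x k * L y k.
  move=> x y hx hy.
  have := congr1 (fun M : 'M_n.+1 => M (inord x) (inord y)) HD.
  rewrite !mxE (lift_max_inord _ _ hx) (lift_max_inord _ _ hy) => ->.
  congr (_ *+ _ + _).
    by rewrite -(inj_eq (@lift_inj _ ord_max)) !lift_max_inord.
  by apply: eq_bigr => k _; rewrite !mxE hx hy.
have OB : forall x y : 'I_n.+2, (0 < x)%N -> (0 < y)%N ->
    Sigma x y = D 0 (inord x.-1) *+ (x == y) + \sum_k L x k * L y k.
  move=> x y hx hy.
  have := congr1 (fun M : 'M_n.+1 => M (inord x.-1) (inord y.-1)) HG.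
  rewrite !mxE (lift0_inord _ _ hx) (lift0_inord _ _ hy) => ->.
  congr (_ *+ _ + _).
    by rewrite -(inj_eq (@lift_inj _ ord0)) !lift0_inord.
  by apply: eq_bigr => k _; rewrite !LG // mxE.
have [j /andP[jBC /andP[j0 jn]]] :
    exists j : 'I_n.+2, (j \notin B :|: C) && (0 < j < n.+1)%N.
  case: (pickP (fun j : 'I_n.+2 => (j \notin B :|: C) && (0 < j < n.+1)%N)) => [j hj|h].
    by exists j.
  exfalso.
  have : [set: 'I_n.+2] \subset B :|: C :|: [set ord0; ord_max].
    apply/subsetP => z _; have := h z; rewrite !inE.
    case: (z \in B) => //; case: (z \in C) => //= /negbT.
    rewrite negb_and -leqNgt -ltnNge => /orP[z0|zn].
      by apply/orP; left; apply/eqP/val_inj; rewrite /=; case: (nat_of_ord z) z0.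
    apply/orP; right; apply/eqP/val_inj => /=.
    by apply/eqP; rewrite eqn_leq -ltnS ltn_ord /=; rewrite ltnS in zn.
  move/subset_leq_card; rewrite cardsT card_ord.
  have c1 := leq_card_setU (B :|: C) [set ord0; ord_max].
  have c2 := leq_card_setU B C; rewrite cB cC in c2.
  have c3 : (#|[set ord0; ord_max : 'I_n.+2]| <= 2)%N by rewrite cards2; case: (_ != _).
  move=> hc; have := leq_trans hp (leq_trans hc (leq_trans c1 (leq_add c2 c3))).
  by rewrite mul2n -addnn addnS ltnn.
have [e [H [_ HH]]] := hF j.
pose rho x : 'I_n.+1 := odflt ord0 (unlift j x).
have lr : forall x : 'I_n.+2, x != j -> lift j (rho x) = x.
  move=> x hx; rewrite eq_sym in hx; have [y ey ue] := unlift_some hx.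
  by rewrite /rho ue /=; exact: esym.
have OH : forall x y : 'I_n.+2, x != j -> y != j -> x != y ->
    Sigma x y = (row (rho x) H *m (row (rho y) H)^T) 0 0.
  move=> x y hx hy hxy.
  have := congr1 (fun M : 'M_n.+1 => M (rho x) (rho y)) HH.
  rewrite !mxE (lr _ hx) (lr _ hy) => ->.
  have -> : (rho x == rho y) = false.
    apply/negbTE; apply: contra hxy => /eqP ee.
    by rewrite -(lr _ hx) -(lr _ hy) ee.
  rewrite mulr0n add0r; apply: eq_bigr => k _; by rewrite !mxE.
have OL : forall x y : 'I_n.+2, x != y ->
    ((x < n.+1) && (y < n.+1))%N || ((0 < x) && (0 < y))%N ->
    Sigma x y = (row x L *m (row y L)^T) 0 0.
  move=> x y hxy /orP[/andP[hx hy]|/andP[hx hy]];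
    [rewrite (OA _ _ hx hy) | rewrite (OB _ _ hx hy)];
    by rewrite (negbTE hxy) mulr0n add0r dotL.
have key : Sigma ord0 ord_max = (row ord0 L *m (row ord_max L)^T) 0 0.
  pose b (i : 'I_m) := nth ord0 (enum B) i.
  pose c (i : 'I_m) := nth ord0 (enum C) i.
  have bB : forall i, b i \in B.
    by move=> i; rewrite -mem_enum; apply: mem_nth; rewrite -cardE cB.
  have cCC : forall i, c i \in C.
    by move=> i; rewrite -mem_enum; apply: mem_nth; rewrite -cardE cC.
  have bj : forall i, b i != j.
    by move=> i; apply/eqP => ee; move: jBC; rewrite -ee inE bB.
  have cj : forall i, c i != j.
    by move=> i; apply/eqP => ee; move: jBC; rewrite -ee inE cCC orbT.
  have bc : forall i k, b i != c k.
    by move=> i k; apply/eqP => ee; have := disjointFr dBC (bB i); rewrite ee cCC.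
  have b0 : forall i, (0 < b i < n.+1)%N by move=> i; apply: hB.
  have c0 : forall i, (0 < c i < n.+1)%N by move=> i; apply: hC.
  have oj : (ord0 : 'I_n.+2) != j by apply/eqP => ee; move: j0; rewrite -ee.
  have mj : (ord_max : 'I_n.+2) != j by apply/eqP => ee; move: jn; rewrite -ee ltnn.
  apply: (@ident _ _ _ Sigma (fun x => row x L) (fun x => row (rho x) H) b c).
  - move=> i k; apply: OL; first exact: bc.
    by have /andP[-> ->] := b0 i; have /andP[-> ->] := c0 k.
  - by move=> i k; apply: OH.
  - move=> k; apply: OL.
      by apply/eqP => ee; have := c0 k; rewrite -ee.
    by have /andP[_ ->] := c0 k.
  - by move=> k; apply: OH; rewrite // eq_sym; have /andP[hh _] := c0 k; rewrite -val_eqE /= neq_ltn hh.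
  - move=> i; apply: OL.
      by apply/eqP => ee; have := b0 i; rewrite ee ltnn andbF.
    by have /andP[hh _] := b0 i; rewrite hh orbT.
  - move=> i; apply: OH => //.
    by have /andP[_ hh] := b0 i; rewrite -val_eqE /= neq_ltn hh.
  - by apply: OH.
  - by rewrite unitmxE unitfE.
exists d, L; split.
  by move=> i; rewrite mxE; case: ifP.
apply/matrixP => x y.
have -> : (diag_mx d + L *m L^T) x y =
    (if (x < n.+1)%N then Delta 0 (inord x) else D 0 (inord x.-1)) *+ (x == y)
    + \sum_k L x k * L y k.
  rewrite !mxE; congr (_ + _); apply: eq_bigr => k _; by rewrite [L^T _ _]mxE.
have [<-|nxy] := eqVneq x y.
  case hx: (x < n.+1)%N; first by rewrite (OA _ _ hx hx) eqxx.
  by rewrite (OB x x) ?eqxx //; move: hx; case: (nat_of_ord x).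
rewrite mulr0n add0r -dotL.
case: (boolP (((x < n.+1) && (y < n.+1)) || ((0 < x) && (0 < y)))%N) => hxy.
  exact: OL.
move: hxy; rewrite negb_or !negb_and -!leqNgt !leqn0 => /andP[h1 /orP[x0|y0]].
  have ex : x = ord0 by apply/val_inj/eqP.
  rewrite ex in h1 *; rewrite /= in h1.
  have ey : y = ord_max.
    by apply/val_inj/eqP; rewrite /= eqn_leq -ltnS ltn_ord h1.
  by rewrite ey key.
have ey : y = ord0 by apply/val_inj/eqP.
rewrite ey in h1 *; rewrite /= ?orbF in h1.
have ex : x = ord_max.
  by apply/val_inj/eqP; rewrite /= eqn_leq -ltnS ltn_ord h1.
by rewrite ex -symS mxE key dot_sym.
Qed.
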